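(* Let $T$ be a ring with $J(T)=0$. Then either $T$ has a maximal subring or the center $C(T)$ of $T$ is integrally closed in $T$, i.e., every element of $T$ which is a root of a monic polynomial with coefficients in $C(T)$ belongs to $C(T)$.
   Context: All rings are associative with identity $1\neq0$; subrings contain the identity. A maximal subring of $T$ is a proper subring with no subring strictly between it and $T$. $J(T)$ is the Jacobson radical of $T$. *)

(* Defs.v *)
From mathcomp Require Import all_boot all_algebra.
Set Implicit Arguments. Unset Strict Implicit. Unset Printing Implicit Defensive.
Import GRing.Theory.
Local Open Scope ring_scope.

Definition is_subring (T : nzRingType) (S : T -> Prop) : Prop :=
  [/\ S 1, (forall x y, S x -> S y -> S (x - y))
         & (forall x y, S x -> S y -> S (x * y))].

Definition is_maximal_subring (T : nzRingType) (S : T -> Prop) : Prop :=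
  [/\ is_subring S, (exists x, ~ S x)
    & forall S' : T -> Prop, is_subring S' -> (forall x, S x -> S' x) ->
        (forall x, S' x <-> S x) \/ (forall x, S' x)].

Definition has_maximal_subring (T : nzRingType) : Prop :=
  exists S : T -> Prop, is_maximal_subring S.

Definition is_left_ideal (T : nzRingType) (I : T -> Prop) : Prop :=
  [/\ I 0, (forall x y, I x -> I y -> I (x - y))
         & (forall r x, I x -> I (r * x))].

Definition is_maximal_left_ideal (T : nzRingType) (I : T -> Prop) : Prop :=
  [/\ is_left_ideal I, ~ I 1
    & forall I' : T -> Prop, is_left_ideal I' -> (forall x, I x -> I' x) ->
        (forall x, I' x <-> I x) \/ (forall x, I' x)].

Definition jacobson (T : nzRingType) (x : T) : Prop :=
  forall I : T -> Prop, is_maximal_left_ideal I -> I x.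

Definition center (T : nzRingType) (x : T) : Prop :=
  forall y : T, x * y = y * x.

Definition center_integrally_closed (T : nzRingType) : Prop :=
  forall (p : {poly T}) (x : T),
    p \is monic -> (forall i, center p`_i) -> root p x -> center x.

(* Main.v *)
From HB Require Import structures.
From mathcomp Require Import all_boot all_algebra.
From mathcomp Require Import boolp generic_quotient ring_quotient classical_sets.
From Stdlib Require Import Classical.
Require Import Defs.
Set Implicit Arguments. Unset Strict Implicit. Unset Printing Implicit Defensive.
Import GRing.Theory.
Local Open Scope ring_scope.

Record tsI (T : nzRingType) := TsI {
  tsP : T -> Prop;
  ts0 : tsP 0;
  tsB : forall x y, tsP x -> tsP y -> tsP (x - y);
  tsL : forall r x, tsP x -> tsP (r * x);
  tsR : forall r x, tsP x -> tsP (x * r);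
  ts1 : ~ tsP 1 }.

Definition tsb (T : nzRingType) (I : tsI T) : pred T := fun t => `[< tsP I t >].

Lemma tsb_zmod (T : nzRingType) (I : tsI T) : zmod_closed (tsb I).
Proof.
split; first by apply/asboolP; apply: ts0.
by move=> a b /asboolP ha /asboolP hb; apply/asboolP; apply: tsB.
Qed.

HB.instance Definition _ (T : nzRingType) (I : tsI T) :=
  GRing.isZmodClosed.Build T (tsb I) (tsb_zmod I).

Section QR.
Variables (T : nzRingType) (I : tsI T).
Import Quotient.
Local Open Scope quotient_scope.
Definition tsZ : zmodClosed T := GRing.ZmodClosed.clone T (tsb I) _.
Definition QT := Quotient.quot tsZ.
HB.instance Definition _ := GRing.Zmodule.on QT.
HB.instance Definition _ := EqQuotient.on QT.
Definition qone : QT := lift_cst QT 1.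
Definition qmul := lift_op2 QT *%R.
Canonical pi_qone_morph := PiConst qone.

Lemma tsbE t : (t \in tsb I) = `[< tsP I t >]. Proof. by []. Qed.

Lemma pi_qmul : {morph \pi_QT : x y / x * y >-> qmul x y}.
Proof.
move=> x y; unlock qmul; apply/eqP; rewrite piE equivE.
rewrite -[_ * _](addrNK (x * repr (\pi_QT y))) -mulrBr.
rewrite -addrA -mulrBl rpredD //.
  rewrite tsbE; apply/asboolP; apply: tsL; apply/asboolP.
  by rewrite -tsbE idealrDE opprK reprK.
rewrite tsbE; apply/asboolP; apply: tsR; apply/asboolP.
by rewrite -tsbE idealrDE opprK reprK.
Qed.
Canonical pi_qmul_morph := PiMorph2 pi_qmul.

Lemma qmulA: associative qmul.
Proof. by move=> x y z; rewrite -[x]reprK -[y]reprK -[z]reprK !piE mulrA. Qed.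
Lemma qmul1: left_id qone qmul.
Proof. by move=> x; rewrite -[x]reprK !piE mul1r. Qed.
Lemma qmulr1: right_id qone qmul.
Proof. by move=> x; rewrite -[x]reprK !piE mulr1. Qed.
Lemma qmulDl: left_distributive qmul +%R.
Proof.
move=> x y z; rewrite -[x]reprK -[y]reprK -[z]reprK.
by apply/eqP; rewrite piE /= mulrDl equiv_refl.
Qed.
Lemma qmulDr: right_distributive qmul +%R.
Proof.
move=> x y z; rewrite -[x]reprK -[y]reprK -[z]reprK.
by apply/eqP; rewrite piE /= mulrDr equiv_refl.
Qed.
Lemma qone_neq0: qone != 0.
Proof. rewrite piE equivE subr0 tsbE; apply/asboolP; exact: ts1. Qed.

HB.instance Definition _ := GRing.Zmodule_isNzRing.Build QT
  qmulA qmul1 qmulr1 qmulDl qmulDr qone_neq0.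

Definition piQ (t : T) : QT := \pi_QT t.
Lemma piQD a b : piQ (a + b) = piQ a + piQ b.
Proof. by rewrite /piQ piE. Qed.
Lemma piQN a : piQ (- a) = - piQ a.
Proof. by rewrite /piQ piE. Qed.
Lemma piQB a b : piQ (a - b) = piQ a - piQ b.
Proof. by rewrite piQD piQN. Qed.
Lemma piQM a b : piQ (a * b) = piQ a * piQ b.
Proof. by rewrite /piQ piE. Qed.
Lemma piQ1 : piQ 1 = 1.
Proof. by rewrite /piQ piE. Qed.
Lemma piQ0 : piQ 0 = 0.
Proof. by rewrite /piQ piE. Qed.
Lemma piQK (d : QT) : piQ (repr d) = d.
Proof. exact: reprK. Qed.
Lemma piQ0E t : (piQ t = 0) <-> tsP I t.
Proof.
split.
  by move/eqP; rewrite -piQ0 /piQ piE equivE subr0 tsbE => /asboolP.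
move=> h; apply/eqP; rewrite -piQ0 /piQ piE equivE subr0 tsbE.
exact/asboolP.
Qed.
Lemma piQX a n : piQ (a ^+ n) = piQ a ^+ n.
Proof. elim: n => [|n IH]; first by rewrite !expr0 piQ1. by rewrite !exprS piQM IH. Qed.
End QR.

Section Core.
Variable D : nzRingType.
Hypothesis linv : forall a : D, a != 0 -> exists b, b * a = 1.

Definition cent (a : D) := forall y, a * y = y * a.

Lemma inv2 (a : D) : a != 0 -> exists b, b * a = 1 /\ a * b = 1.
Proof.
move=> a0; have [b ba] := linv a0.
have b0 : b != 0 by apply/eqP=> b0; move: ba; rewrite b0 mul0r => /eqP; rewrite eq_sym oner_eq0.
have [c cb] := linv b0.
have ca : c = a by rewrite -[c]mulr1 -ba mulrA cb mul1r.
by exists b; split => //; rewrite -ca.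
Qed.

Lemma cent0 : cent 0. Proof. by move=> y; rewrite mul0r mulr0. Qed.
Lemma cent1 : cent 1. Proof. by move=> y; rewrite mul1r mulr1. Qed.
Lemma centD a b : cent a -> cent b -> cent (a + b).
Proof. by move=> ha hb y; rewrite mulrDl mulrDr ha hb. Qed.
Lemma centM a b : cent a -> cent b -> cent (a * b).
Proof. by move=> ha hb y; rewrite -mulrA hb mulrA ha mulrA. Qed.
Lemma cent_sum (I : Type) (r : seq I) (P : pred I) (F : I -> D) :
  (forall i, cent (F i)) -> cent (\sum_(i <- r | P i) F i).
Proof. by move=> h; apply: (big_ind cent) => //; [exact: cent0 | exact: centD]. Qed.

Variable x : D.
Hypothesis xnc : ~ cent x.

Definition rel (d : nat) := exists c : nat -> D, (forall i, cent (c i)) /\ c d = 1 /\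
   \sum_(i < d.+1) c i * x ^+ i = 0.

Lemma rel_min d : rel d -> exists N, rel N /\ forall m, (m < N)%N -> ~ rel m.
Proof.
elim: d {-2}d (leqnn d) => [|n IH] d hd rd.
  by exists d; split => // m; move: hd; rewrite leqn0 => /eqP ->; rewrite ltn0.
have [h|h] := classic (exists m, (m < d)%N /\ rel m).
  case: h => m [md rm]; apply: (IH m) => //; rewrite -ltnS; exact: leq_trans md hd.
exists d; split => // m md rm; apply: h; by exists m.
Qed.


Variables (N : nat) (q : nat -> D).
Hypotheses (qc : forall i, cent (q i)) (qN : q N = 1)
  (qx : \sum_(i < N.+1) q i * x ^+ i = 0) (Nmin : forall m, (m < N)%N -> ~ rel m).

Definition inU (u : nat -> D) := exists fam : seq (D * D), forall j, (j < N)%N ->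
  u j = \sum_(ab <- fam) ab.1 * x ^+ j * ab.2.

Lemma inU_pow : inU (fun j => x ^+ j).
Proof. by exists [:: (1, 1)] => j _; rewrite big_seq1 /= mul1r mulr1. Qed.

Lemma inU_mull d u : inU u -> inU (fun j => d * u j).
Proof.
case=> fam h; exists (map (fun ab => (d * ab.1, ab.2)) fam) => j hj.
by rewrite h // big_map mulr_sumr; apply: eq_bigr => ab _ /=; rewrite !mulrA.
Qed.

Lemma inU_mulr d u : inU u -> inU (fun j => u j * d).
Proof.
case=> fam h; exists (map (fun ab => (ab.1, ab.2 * d)) fam) => j hj.
by rewrite h // big_map mulr_suml; apply: eq_bigr => ab _ /=; rewrite !mulrA.
Qed.

Lemma inU_sub u w : inU u -> inU w -> inU (fun j => u j - w j).
Proof.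
case=> fu hu [fw hw]; exists (fu ++ map (fun ab => (- ab.1, ab.2)) fw) => j hj.
rewrite hu // hw // big_cat big_map /= -sumrN; congr (_ + _).
by apply: eq_bigr => ab _ /=; rewrite !mulNr.
Qed.

Definition supp (u : nat -> D) := #|[set j : 'I_N | u j != 0]|.

Lemma central_exists : exists u, inU u /\ u 0%N = 1 /\ forall j, (j < N)%N -> cent (u j).
Proof.
suff H : forall n u, (supp u < n)%N -> inU u -> u 0%N = 1 ->
    exists u, inU u /\ u 0%N = 1 /\ forall j, (j < N)%N -> cent (u j).
  apply: (H (supp (fun j => x ^+ j)).+1 (fun j => x ^+ j)) => //; try exact: inU_pow; by rewrite expr0.
elim=> [|n IH] u //.
move=> hs hu u0.
have [hc|hc] := classic (forall j, (j < N)%N -> cent (u j)); first by exists u.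
have [i hi] : exists i, ~ ((i < N)%N -> cent (u i)).
  by apply: not_all_ex_not.
have iN : (i < N)%N by apply: NNPP => h; apply: hi => /h.
have [d hd] : exists d, u i * d <> d * u i.
  by apply: not_all_ex_not => h; apply: hi => _.
pose w j := d * u j - u j * d.
have hw : inU w by apply: inU_sub; [exact: inU_mull | exact: inU_mulr].
have wi : w i != 0 by rewrite /w subr_eq0; apply/eqP => e; apply: hd; rewrite e.
have [e [ew we]] := inv2 wi.
pose u' j := u j - (u i * e) * w j.
have hu' : inU u' by apply: inU_sub => //; exact: inU_mull.
apply: (IH u') => //; last by rewrite /u' /w u0 mulr1 mul1r subrr mulr0 subr0.
rewrite ltnS in hs; apply: leq_trans hs; rewrite /supp.
apply: proper_card; apply/properP; split.
  apply/fintype.subsetP => j; rewrite !inE; apply: contra => /eqP uj.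
  by rewrite /u' uj /w uj mulr0 mul0r subrr mulr0 subrr.
have ui0 : u i != 0.
  by apply/eqP => ui; move: wi; rewrite /w ui mulr0 mul0r subrr eqxx.
have u'i : u' i = 0 by rewrite /u' -mulrA ew mulr1 subrr.
exists (Ordinal iN); rewrite !inE /= ?ui0 ?u'i ?eqxx //.
Qed.


Lemma zmod4 (a b c d : D) : a + (b - c) + d - (a + b) = d - c.
Proof.
by rewrite addrA -[a + b - c + d]addrA [a + b + _]addrC addrK addrC.
Qed.

Definition Tl (w : D) (l : nat) := \sum_(i < l.+1) x ^+ i * w * x ^+ (l - i).

Lemma TlS w l : Tl w l.+1 = Tl w l * x + x ^+ l.+1 * w.
Proof.
rewrite /Tl big_ord_recr /= subnn expr0 mulr1 mulr_suml; congr (_ + _).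
apply: eq_bigr => i _ /=; rewrite subSn ?exprSr ?mulrA //.
by rewrite -ltnS.
Qed.

Lemma Tl_comm w l : x * Tl w l - Tl w l * x = x ^+ l.+1 * w - w * x ^+ l.+1.
Proof.
elim: l => [|l IH].
  by rewrite /Tl big_ord1 /= subnn !expr0 mul1r mulr1 expr1.
have E : x * Tl w l = Tl w l * x + (x ^+ l.+1 * w - w * x ^+ l.+1).
  by rewrite -IH addrC subrK.
rewrite TlS.
have e1 : x * (Tl w l * x) = Tl w l * x * x + (x ^+ l.+1 * w * x - w * x ^+ l.+2).
  by rewrite mulrA E mulrDl mulrBl -[w * x ^+ l.+1 * x]mulrA -exprSr.
have e2 : x * (x ^+ l.+1 * w) = x ^+ l.+2 * w by rewrite mulrA -exprS.
rewrite mulrDr e1 e2 mulrDl; exact: zmod4.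
Qed.

Definition Phi w := \sum_(l < N) q l.+1 * Tl w l.

Lemma Phi_comm w : x * Phi w = Phi w * x.
Proof.
apply/eqP; rewrite -subr_eq0; apply/eqP.
have H : \sum_(i < N.+1) q i * (x ^+ i * w - w * x ^+ i) = 0.
  rewrite (eq_bigr (fun i : 'I_N.+1 => q i * x ^+ i * w - w * (q i * x ^+ i))); last first.
    by move=> i _; rewrite mulrBr !mulrA (qc i w).
  by rewrite sumrB -mulr_suml -mulr_sumr qx mul0r mulr0 subr0.
rewrite big_ord_recl /= !expr0 mul1r mulr1 subrr mulr0 add0r in H.
rewrite -H /Phi mulr_sumr mulr_suml -sumrB; apply: eq_bigr => l _.
by rewrite -Tl_comm mulrBr !mulrA (qc l.+1 x).
Qed.

Definition G (u : nat -> D) := \sum_(l < N) q l.+1 * \sum_(i < l.+1) x ^+ i * u (l - i)%N.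

Lemma key (u : nat -> D) (fam : seq (D * D)) y :
  (forall j, (j < N)%N -> cent (u j)) ->
  (forall j, (j < N)%N -> u j = \sum_(ab <- fam) ab.1 * x ^+ j * ab.2) ->
  \sum_(ab <- fam) Phi (y * ab.1) * ab.2 = G u * y.
Proof.
move=> uc hu.
rewrite /Phi /G mulr_suml.
under eq_bigr do rewrite mulr_suml.
rewrite exchange_big /=; apply: eq_bigr => l _.
have hl : forall i : 'I_l.+1, ((l - i) < N)%N.
  by move=> i; apply: leq_ltn_trans (leq_subr i l) (ltn_ord l).
rewrite -mulrA mulr_suml.
under [in RHS]eq_bigr => i _ do rewrite -mulrA (uc _ (hl i) y) mulrA (hu _ (hl i)) mulr_sumr.
rewrite exchange_big /= mulr_sumr; apply: eq_bigr => ab _.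
rewrite /Tl -mulrA mulr_suml !mulr_sumr; apply: eq_bigr => i _.
by rewrite !mulrA.
Qed.


Definition cx (z : D) := z * x = x * z.
Lemma cxD a b : cx a -> cx b -> cx (a + b).
Proof. by rewrite /cx => ha hb; rewrite mulrDl mulrDr ha hb. Qed.
Lemma cxM a b : cx a -> cx b -> cx (a * b).
Proof. by rewrite /cx => ha hb; rewrite -mulrA hb mulrA ha mulrA. Qed.
Lemma cx_cent a : cent a -> cx a.
Proof. by move=> h; exact: h. Qed.
Lemma cxX n : cx (x ^+ n).
Proof. by rewrite /cx -exprSr exprS. Qed.
Lemma cx_sum (I : Type) (r : seq I) (P : pred I) (F : I -> D) :
  (forall i, cx (F i)) -> cx (\sum_(i <- r | P i) F i).
Proof.
move=> h; apply: (big_ind cx) => //; [by rewrite /cx mul0r mulr0 | exact: cxD].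
Qed.

Lemma G_ne0 u : u 0%N = 1 -> (forall j, (j < N)%N -> cent (u j)) -> G u != 0.
Proof.
move=> u0 uc; apply/eqP; rewrite /G => G0.
case: N qN qx Nmin G0 uc => [|n] qN' qx' Nmin' G0 uc.
  move: qx'; rewrite big_ord1 expr0 mulr1 qN' => /eqP; by rewrite oner_eq0.
apply: (Nmin' n (ltnSn n)).
pose c i := \sum_(l < n.+1) (if (i <= l)%N then q l.+1 * u (l - i)%N else 0).
exists c; split; [|split].
- move=> i; apply: cent_sum => l; case: ifP => _; last exact: cent0.
  apply: centM => //; apply: uc; apply: leq_ltn_trans (leq_subr _ _) (ltn_ord l).
- rewrite /c big_ord_recr /= leqnn subnn u0 qN' mulr1 big1 ?add0r //.
  by move=> l _; rewrite leqNgt ltn_ord.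
- apply: etrans G0; under [in RHS]eq_bigr => l _.
    rewrite (big_ord_widen n.+1 (fun i => x ^+ i * u (l - i)%N) (ltn_ord l)) big_mkcond mulr_sumr.
  over.
  rewrite exchange_big /=; apply: eq_bigr => i _.
  rewrite /c mulr_suml; apply: eq_bigr => l _; rewrite ltnS.
  case: ifP => il; last by rewrite mul0r mulr0.
  rewrite -mulrA; congr (_ * _); apply: uc.
  apply: leq_ltn_trans (leq_subr _ _) (ltn_ord l).
Qed.

End Core.

Lemma core (D : nzRingType) (linv : forall a : D, a != 0 -> exists b, b * a = 1)
  (x : D) (xnc : ~ cent x) (hr : exists d, rel x d) :
  exists fam : seq (D * D), forall y, exists c : D * D -> D,
    (forall ab, c ab * x = x * c ab) /\ y = \sum_(ab <- fam) c ab * ab.2.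
Proof.
case: hr => d rd; have [N [[q [qc [qN qx]]] Nmin]] := rel_min rd.
have [u [[fam hfam] [u0 uc]]] := central_exists linv x N.
have Gn := G_ne0 qc qN qx Nmin u0 uc.
have [e [eG Ge]] := inv2 linv Gn.
have Gx : cx x (G x N q u).
  rewrite /G; apply: cx_sum => l; apply: cxM; first exact: cx_cent.
  apply: cx_sum => i; apply: cxM; first exact: cxX.
  apply: cx_cent; apply: uc; apply: leq_ltn_trans (leq_subr _ _) (ltn_ord l).
have ex : cx x e.
  by rewrite /cx -[e * x]mulr1 -Ge mulrA -(mulrA e) -Gx mulrA eG mul1r.
exists fam => y; exists (fun ab => e * Phi x N q (y * ab.1)); split.
  by move=> ab; rewrite -mulrA -(Phi_comm qc qx) !mulrA ex.
rewrite -[y in LHS]mul1r -eG -mulrA -(key q y uc hfam) mulr_sumr.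
by apply: eq_bigr => ab _; rewrite mulrA.
Qed.

Lemma subring_add (T : nzRingType) (S : T -> Prop) : is_subring S ->
  [/\ S 0, forall a, S a -> S (- a) & forall a b, S a -> S b -> S (a + b)].
Proof.
case=> S1 SB SM.
have S0 : S 0 by rewrite -(subrr 1); apply: SB.
have SN : forall a, S a -> S (- a) by move=> a Sa; rewrite -sub0r; apply: SB.
by split => // a b Sa Sb; rewrite -[b]opprK; apply: SB => //; apply: SN.
Qed.

Lemma subring_sum (T : nzRingType) (S : T -> Prop) (I : Type) (r : seq I) (F : I -> T) :
  is_subring S -> (forall i, S (F i)) -> S (\sum_(i <- r) F i).
Proof.
move=> hS hF; have [S0 _ SD] := subring_add hS.
by elim: r => [|i r IH]; rewrite ?big_nil ?big_cons //; apply: SD.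
Qed.

Lemma subring_sum_seq (T : nzRingType) (S : T -> Prop) (I : eqType) (r : seq I) (F : I -> T) :
  is_subring S -> (forall i, i \in r -> S (F i)) -> S (\sum_(i <- r) F i).
Proof.
move=> hS hF; rewrite big_seq_cond; have [S0 _ SD] := subring_add hS.
by apply: (big_ind S) => // i /andP[ir _]; apply: hF.
Qed.

Lemma zorn_fg (T : nzRingType) (S : T -> Prop) (bs : seq T) :
  is_subring S -> (exists t, ~ S t) ->
  (forall S', is_subring S' -> (forall t, S t -> S' t) ->
      (forall b, b \in bs -> S' b) -> forall t, S' t) ->
  has_maximal_subring T.
Proof.
move=> hS [t0 nS] gen.
pose P := fun A : set T => A = set0 \/
   (is_subring A /\ (forall t, S t -> A t) /\ exists t, ~ A t).
have PS : P S by right; split => //; split => //; exists t0.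
have [|A [PA Amax]] := @Zorn_bigcup T P.
  move=> F FP Ftot.
  have [[X0 [FX0 [x0 X0x0]]]|hne] := classic (exists X, F X /\ exists t, X t); last first.
    left; apply/seteqP; split => [z [X FX Xz]|z //]; exfalso; apply: hne; exists X; split => //; by exists z.
  have memP : forall W, F W -> (exists t, W t) ->
      is_subring W /\ (forall t, S t -> W t) /\ exists t, ~ W t.
    move=> W FW [z Wz]; case: (FP W FW) => // W0; by move: Wz; rewrite W0.
  have [X0sub [X0S _]] := memP X0 FX0 (ex_intro _ x0 X0x0).
  right; split; [split|split].
  - by exists X0 => //; case: X0sub.
  - move=> a b [X FX Xa] [Y FY Yb].
    have [XY|YX] := Ftot X Y FX FY.
      exists Y => //; have [[_ YB _] _] := memP Y FY (ex_intro _ b Yb).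
      by apply: YB => //; apply: XY.
    exists X => //; have [[_ XB _] _] := memP X FX (ex_intro _ a Xa).
    by apply: XB => //; apply: YX.
  - move=> a b [X FX Xa] [Y FY Yb].
    have [XY|YX] := Ftot X Y FX FY.
      exists Y => //; have [[_ _ YM] _] := memP Y FY (ex_intro _ b Yb).
      by apply: YM => //; apply: XY.
    exists X => //; have [[_ _ XM] _] := memP X FX (ex_intro _ a Xa).
    by apply: XM => //; apply: YX.
  - by move=> t St; exists X0 => //; apply: X0S.
  - apply: NNPP => hall.
    have all' : forall t, exists2 X, F X & X t.
      move=> t; apply: NNPP => h; apply: hall; exists t => h'; exact: h h'.
    have [Y [FY [Yne Yb]]] : exists Y, F Y /\ (exists t, Y t) /\ forall b, b \in bs -> Y b.
      elim: bs {gen} => [|b bs' IH].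
        by exists X0; split => //; split; [exists x0|].
      have [Y [FY [Yne Yb]]] := IH.
      have [Z FZ Zb] := all' b.
      have [YZ|ZY] := Ftot Y Z FY FZ.
        exists Z; split => //; split; first by exists b.
        by move=> c; rewrite inE => /orP[/eqP ->|/Yb /YZ].
      exists Y; split => //; split => //.
      by move=> c; rewrite inE => /orP[/eqP ->|/Yb]; [apply: ZY|].
    have [Ysub [YS [t Yt]]] := memP Y FY Yne.
    by apply: Yt; apply: gen.
have Ane : A <> set0.
  move=> A0; apply: (Amax S) => //; rewrite A0; split; first by move=> t.
  by move=> h; have := h 1; apply; case: hS.
case: PA => // -[Asub [AS [ta nA]]].
exists A; split => // [|S' S'sub AS']; first by exists ta.
have [hall|hn] := classic (forall t, S' t); first by right.
left; move=> t; split; last exact: AS'.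
move=> S't; apply: NNPP => nAt.
apply: (Amax S'); first by split => // h; exact: nAt (h t S't).
right; split => //; split; first by move=> u /AS /AS'.
by apply: NNPP => h; apply: hn => u; apply: NNPP => h'; apply: h; exists u.
Qed.

Lemma idealizer (T : nzRingType) (M : T -> Prop) : is_maximal_left_ideal M ->
  (exists m t, M m /\ ~ M (m * t)) -> has_maximal_subring T.
Proof.
case=> [[M0 MB ML] M1 Mmax] [m [t [Mm nmt]]].
pose S := fun s => forall m, M m -> M (m * s).
have Ssub : is_subring S.
  split.
  - by move=> m' Mm'; rewrite mulr1.
  - by move=> a b Sa Sb m' Mm'; rewrite mulrBr; apply: MB; [apply: Sa | apply: Sb].
  - by move=> a b Sa Sb m' Mm'; rewrite mulrA; apply: Sb; apply: Sa.
have MS : forall a, M a -> S a by move=> a Ma m' Mm'; apply: ML.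
exists S; split => //; first by exists t => h; apply: nmt; apply: h.
move=> S' S'sub SS'.
have [hall|hn] := classic (forall s, S' s -> S s).
  by left => s; split => [/hall|/SS'].
right.
have [s [S's nSs]] : exists s, S' s /\ ~ S s.
  apply: NNPP => h; apply: hn => s S's; apply: NNPP => nS; apply: h; by exists s.
have [m' [Mm' nm's]] : exists m', M m' /\ ~ M (m' * s).
  apply: NNPP => h; apply: nSs => m' Mm'; apply: NNPP => nM; apply: h; by exists m'.
pose L := fun z => exists a b, M a /\ M b /\ z = a + b * s.
have Lid : is_left_ideal L.
  split.
  - by exists 0, 0; split => //; split => //; rewrite mul0r addr0.
  - move=> u v [a1 [b1 [Ma1 [Mb1 ->]]]] [a2 [b2 [Ma2 [Mb2 ->]]]].
    exists (a1 - a2), (b1 - b2); split; first exact: MB.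
    by split; [exact: MB | rewrite mulrBl opprD addrACA].
  - move=> r u [a [b [Ma [Mb ->]]]]; exists (r * a), (r * b).
    by split; [exact: ML | split; [exact: ML | rewrite mulrDr mulrA]].
have ML' : forall u, M u -> L u.
  by move=> u Mu; exists u, 0; split => //; split => //; rewrite mul0r addr0.
case: (Mmax L Lid ML') => [hL|hL].
  by exfalso; apply: nm's; apply/hL; exists 0, m'; split => //; split => //; rewrite add0r.
have [a [b [Ma [Mb e1]]]] := hL 1.
move=> w; have -> : w = w * a + (w * b) * s by rewrite -mulrA -mulrDr -e1 mulr1.
have [_ _ S'D] := subring_add S'sub.
case: S'sub => _ _ S'M.
apply: S'D; first by apply: SS'; apply: MS; apply: ML.
by apply: S'M => //; apply: SS'; apply: MS; apply: ML.
Qed.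

Lemma left_inv_mod (T : nzRingType) (M : T -> Prop) : is_maximal_left_ideal M ->
  forall a, ~ M a -> exists b, M (b * a - 1).
Proof.
case=> [[M0 MB ML] M1 Mmax] a nMa.
pose L := fun z => exists m r, M m /\ z = m + r * a.
have Lid : is_left_ideal L.
  split.
  - by exists 0, 0; split => //; rewrite mul0r addr0.
  - move=> u v [m1 [r1 [Mm1 ->]]] [m2 [r2 [Mm2 ->]]].
    exists (m1 - m2), (r1 - r2); split; first exact: MB.
    by rewrite mulrBl opprD addrACA.
  - move=> r u [m [r' [Mm ->]]]; exists (r * m), (r * r').
    by split; [exact: ML | rewrite mulrDr mulrA].
have ML' : forall u, M u -> L u.
  by move=> u Mu; exists u, 0; split => //; rewrite mul0r addr0.
case: (Mmax L Lid ML') => [hL|hL].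
  by exfalso; apply: nMa; apply/hL; exists 0, 1; split => //; rewrite add0r mul1r.
have [m [r [Mm e1]]] := hL 1.
exists r; have -> : r * a - 1 = 0 - m by rewrite e1 opprD addrC -addrA addNr addr0 sub0r.
by apply: MB.
Qed.

Theorem corollary3p13 (T : nzRingType) :
  (forall x : T, jacobson x -> x = 0) ->
  has_maximal_subring T \/ center_integrally_closed T.
Proof.
move=> J.
have [H|H] := classic (has_maximal_subring T); [by left | right].
move=> p x pm pc px; apply: NNPP => nc.
have [y xy] : exists y, x * y <> y * x by apply: not_all_ex_not.
have z0 : x * y - y * x <> 0 by move/eqP; rewrite subr_eq0 => /eqP.
have [M [Mmax nMz]] : exists M, is_maximal_left_ideal M /\ ~ M (x * y - y * x).
  apply: NNPP => h; apply: z0; apply: J => M hM; apply: NNPP => nM; apply: h; by exists M.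
case: (Mmax) => [[M0 MB ML] M1 _].
have MR : forall r m, M m -> M (m * r).
  move=> r m Mm; apply: NNPP => h; apply: H; apply: (idealizer Mmax); by exists m, r.
pose I := TsI M0 MB ML MR M1.
pose pi := piQ I.
have linv : forall a : QT I, a != 0 -> exists b, b * a = 1.
  move=> a a0.
  have nM : ~ M (repr a).
    move=> h; move/eqP: a0; apply; rewrite -(piQK a); exact/(piQ0E I).
  have [b hb] := left_inv_mod Mmax nM.
  exists (pi b); apply/eqP; rewrite -subr_eq0; apply/eqP.
  by rewrite -(piQK a) /pi -piQM -piQ1 -piQB; apply/(piQ0E I).
have xnc : ~ cent (pi x).
  move=> h; apply: nMz; apply/(piQ0E I); rewrite piQB !piQM.
  by rewrite -/pi h subrr.
have sp : (0 < size p)%N by rewrite size_poly_gt0 monic_neq0.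
have hr : exists d, rel (pi x) d.
  exists (size p).-1, (fun i => pi p`_i); split; [|split].
  - move=> i w; rewrite -(piQK w) /pi -!piQM; congr (piQ I _); exact: pc.
  - by rewrite -/(lead_coef p) (monicP pm) /pi piQ1.
  - rewrite prednK //.
    under eq_bigr do rewrite /pi -piQX -piQM.
    rewrite -(big_morph (piQ I) (piQD I) (piQ0 I)) -horner_coef.
    by move/rootP: px => ->; rewrite piQ0.
have [fam hfam] := core linv xnc hr.
pose S := fun t => pi x * pi t = pi t * pi x.
have Ssub : is_subring S.
  split.
  - by rewrite /S /pi piQ1 mul1r mulr1.
  - by move=> a b; rewrite /S /pi piQB mulrBr mulrBl => -> ->.
  - by move=> a b; rewrite /S /pi piQM => ha hb; rewrite mulrA ha -mulrA hb mulrA.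
apply: H; apply: (@zorn_fg T S (map (fun ab => repr ab.2) fam) Ssub).
  by exists y => h; apply: nMz; apply/(piQ0E I); rewrite piQB !piQM -/pi h subrr.
move=> S' S'sub SS' Sbs t.
have [c [cx et]] := hfam (pi t).
pose s := \sum_(ab <- fam) repr (c ab) * repr ab.2.
have ps : pi s = pi t.
  rewrite et /s /pi (big_morph (piQ I) (piQD I) (piQ0 I)).
  by apply: eq_bigr => ab _; rewrite piQM !piQK.
have Sts : S (t - s) by rewrite /S /pi piQB -/pi ps subrr mulr0 mul0r.
have S's : S' s.
  apply: subring_sum_seq => // ab abf; case: S'sub => _ _ S'M; apply: S'M.
    by apply: SS'; rewrite /S /pi piQK cx.
  by apply: Sbs; apply: (map_f (fun ab => repr ab.2) abf).
have [_ _ S'D] := subring_add S'sub.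
by rewrite -(subrK s t); apply: S'D => //; apply: SS'.
Qed.
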